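(* Let $k\ge1$, let $A,B_1,\dots,B_k,C_1,\dots,C_k\in\mathbb{C}^{r\times r}$ with $C_i+mI$ invertible for all integers $m\ge0$ and all $i$, and assume $AB_i=B_iA$, $B_iB_j=B_jB_i$, $C_iC_j=C_jC_i$ for all $i,j$. Let $n\ge1$ and suppose $A+mI$ is invertible for all $m\ge0$. Then $$F_{\mathcal A}[A+nI]=\sum_{N_k\le n}\binom{n}{n_1,\dots,n_k}\prod_{i=1}^k (B_i)_{n_i}x_i^{n_i}\;F_{\mathcal A}[A+N_kI,\,B_1+n_1I,\dots,B_k+n_kI,\,C_1+n_1I,\dots,C_k+n_kI]\;\prod_{i=1}^k (C_i)^{-1}_{n_i}.$$ Furthermore, if $A-n_1I$ is invertible for all $0\le n_1\le n$, then $$F_{\mathcal A}[A-nI]=\sum_{N_k\le n}\binom{n}{n_1,\dots,n_k}\prod_{i=1}^k (B_i)_{n_i}(-x_i)^{n_i}\;F_{\mathcal A}[B_1+n_1I,\dots,B_k+n_kI,\,C_1+n_1I,\dots,C_k+n_kI]\;\prod_{i=1}^k (C_i)^{-1}_{n_i}.$$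
   Context: For $M\in\mathbb{C}^{r\times r}$: $(M)_0=I$, $(M)_m=M(M+I)\cdots(M+(m-1)I)$, $(M)^{-1}_m=((M)_m)^{-1}$. $$F_{\mathcal A}=F_{\mathcal A}[A,B_1,\dots,B_k;C_1,\dots,C_k;x_1,\dots,x_k]=\sum_{m_1,\dots,m_k\ge0}(A)_{m_1+\cdots+m_k}\prod_{i=1}^k(B_i)_{m_i}\prod_{i=1}^k(C_i)^{-1}_{m_i}\prod_{i=1}^k\frac{x_i^{m_i}}{m_i!},$$ $x_i$ scalar variables, matrix products in order of increasing index; identities are of formal power series in the $x_i$. Bracket notation $F_{\mathcal A}[\dots]$ lists only the shifted parameters (others unchanged). The sum runs over all tuples $(n_1,\dots,n_k)$ of nonnegative integers with $N_k:=n_1+\cdots+n_k\le n$, and $\binom{n}{n_1,\dots,n_k}:=\frac{n!}{n_1!\cdots n_k!\,(n-N_k)!}$. In the second formula the parameter $A$ is unshifted. *)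

(* Defs.v *)
From HB Require Import structures.
From mathcomp Require Import all_boot all_order all_algebra.
From mathcomp Require Import reals.
From mathcomp Require Import complex.
Set Implicit Arguments. Unset Strict Implicit. Unset Printing Implicit Defensive.
Import Order.TTheory GRing.Theory Num.Theory.
Local Open Scope ring_scope.

Section Defs.
Variables (K : fieldType) (r k : nat).

Definition mxprod (M : 'I_k -> 'M[K]_r) : 'M[K]_r :=
  \big[mulmx/1%:M]_(i < k) M i.

Definition mpoch (M : 'M[K]_r) (m : nat) : 'M[K]_r :=
  \big[mulmx/1%:M]_(j < m) (M + (j%:R)%:M).

Definition mpochinv (M : 'M[K]_r) (m : nat) : 'M[K]_r := invmx (mpoch M m).

Definition mindex := {ffun 'I_k -> nat}.

Definition mtot (m : mindex) : nat := \sum_(i < k) m i.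

(* formal power series in x_1..x_k with r x r matrix coefficients,
   represented by their coefficient function: f m = coefficient of
   x_1^{m_1} ... x_k^{m_k} *)
Definition fps := mindex -> 'M[K]_r.

Definition FA (A : 'M[K]_r) (B C : 'I_k -> 'M[K]_r) : fps := fun m =>
  ((\prod_(i < k) (m i)`!)%N%:R)^-1 *:
    (mpoch A (mtot m) *m mxprod (fun i => mpoch (B i) (m i))
       *m mxprod (fun i => mpochinv (C i) (m i))).

(* coefficient at m of the series  P * x^nv * f * Q  (x^nv = prod x_i^{nv_i}) *)
Definition mono_mul (P : 'M[K]_r) (nv : mindex) (f : fps) (Q : 'M[K]_r) : fps :=
  fun m => if [forall i, (nv i <= m i)%N]
           then P *m f [ffun i => (m i - nv i)%N] *m Q else 0.

Definition multinom (n : nat) (nv : mindex) : nat :=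
  (n`! %/ ((\prod_(i < k) (nv i)`!) * (n - mtot nv)`!))%N.

End Defs.

(* Main.v *)
Require Import Defs.
From HB Require Import structures.
From mathcomp Require Import all_boot all_order all_algebra.
From mathcomp Require Import reals.
From mathcomp Require Import complex.
From mathcomp Require Import ring zify.
Import Order.TTheory GRing.Theory Num.Theory.
Local Open Scope ring_scope.
Set Implicit Arguments. Unset Strict Implicit. Unset Printing Implicit Defensive.

Section PartI.
Variable R0 : comNzRingType.

Definition Pc (x : R0) (M : nat) : R0 := \prod_(j < M) (x + j%:R).
Definition cc (n M N : nat) : nat := ('C(n, N) * 'C(M, N) * N`!)%N.

Lemma Pc0 x : Pc x 0 = 1.
Proof. by rewrite /Pc big_ord0. Qed.

Lemma PcSl x l : Pc x l.+1 = x * Pc (x + 1) l.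
Proof.
rewrite /Pc big_ord_recl /= addr0; congr (_ * _).
by apply: eq_bigr => j _; rewrite /bump /= add1n -nat1r addrA.
Qed.

Lemma PcSr x l : Pc x l.+1 = Pc x l * (x + l%:R).
Proof. by rewrite /Pc big_ord_recr. Qed.

Lemma Pc_shift x L : Pc (x + 1) L = Pc x L + L%:R * Pc (x + 1) L.-1.
Proof.
case: L => [|l]; first by rewrite !Pc0 mul0r addr0.
rewrite [Pc (x + 1) _]PcSr [Pc x _]PcSl /= -natr1; ring.
Qed.

Lemma cc_step n M N :
  cc n.+1 M N.+1 = (cc n M N.+1 + cc n M N * (M - N))%N.
Proof.
rewrite /cc binS factS; have h := mul_bin_left M N.
move: h; move: (M - N)%N ('C(M, N)) ('C(M, N.+1)) (N`!) ('C(n, N)) ('C(n, N.+1)) => a b c d e f h.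
rewrite mulnDl mulnDl; apply/eqP; rewrite eqn_add2l; apply/eqP.
transitivity (e * (N.+1 * c) * d)%N; first ring. rewrite h; ring.
Qed.

Lemma sum_step n M K (F : nat -> R0) :
  \sum_(N < K.+1) (cc n.+1 M N)%:R * F N =
  \sum_(N < K.+1) (cc n M N)%:R * F N +
  \sum_(N < K) (cc n M N * (M - N))%:R * F N.+1.
Proof.
rewrite !big_ord_recl /= -addrA; congr (_ + _).
  by rewrite /cc !bin0.
rewrite -big_split /=; apply: eq_bigr => j _.
by rewrite /bump /= add1n cc_step natrD mulrDl.
Qed.

Lemma I1 n x M K : (n < K)%N ->
  Pc (x + n%:R) M = \sum_(N < K) (cc n M N)%:R * Pc (x + N%:R) (M - N).
Proof.
elim: n x K => [|n IH] x K hK.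
  case: K hK => // K _; rewrite big_ord_recl /= /cc bin0 fact0 !muln1 addr0 mul1n bin0 subn0 mul1r.
  rewrite big1 ?addr0 // => j _. by rewrite /bump /= add1n bin0n !mul0n mul0r.
case: K hK => // K hK.
rewrite (sum_step n M K (fun N => Pc (x + N%:R) (M - N))) big_ord_recr /= [in X in _ = _ + X + _]/cc bin_small // !mul0n mul0r addr0.
rewrite -natr1 addrA addrAC (IH _ _ hK) -big_split /=.
apply: eq_bigr => j _.
rewrite addrAC Pc_shift mulrDr natrM -mulrA; congr (_ + _ * _).
by rewrite -natr1 addrA subnS.
Qed.

Lemma I2 n x M K : (n < K)%N ->
  Pc (x - n%:R) M = \sum_(N < K) (cc n M N)%:R * ((-1) ^+ N * Pc x (M - N)).
Proof.
elim: n x K => [|n IH] x K hK.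
  case: K hK => // K _; rewrite big_ord_recl /= /cc bin0 fact0 !muln1 subr0 mul1n bin0 subn0 mul1r expr0 mul1r.
  rewrite big1 ?addr0 // => j _. by rewrite /bump /= add1n bin0n !mul0n mul0r.
case: K hK => // K hK.
rewrite (sum_step n M K (fun N => (-1) ^+ N * Pc x (M - N))) big_ord_recr /= [in X in _ = _ + X + _]/cc bin_small // !mul0n mul0r addr0.
rewrite -natr1 opprD addrA addrAC (IH _ _ hK) -big_split /=.
apply: eq_bigr => j _.
have E : Pc (x - 1) (M - j) = Pc x (M - j) - (M - j)%:R * Pc x (M - j.+1).
  by rewrite -[in RHS](subrK 1 x) Pc_shift subrK subnS addrK.
rewrite E natrM exprS; ring.
Qed.

End PartI.

Section PartII.
Variable R0 : comNzRingType.

Definition agree (n : nat) (p q : {poly R0}) := forall j, (j <= n)%N -> p`_j = q`_j.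

Lemma agreeM n p p' q q' : agree n p p' -> agree n q q' -> agree n (p * q) (p' * q').
Proof.
move=> hp hq j hj; rewrite !coefM; apply: eq_bigr => i _.
have hi : (i <= n)%N by apply: leq_trans hj; rewrite -ltnS.
by rewrite hp // hq // (leq_trans (leq_subr _ _) hj).
Qed.

Lemma coef1X a j : ((1 + 'X) ^+ a)`_j = ('C(a, j))%:R :> R0.
Proof.
elim: a j => [|a IH] j.
  by rewrite expr0 coef1; case: j.
rewrite exprS mulrDl mul1r coefD coefXM IH; case: j => [|j] //=.
  by rewrite !bin0 addr0.
by rewrite IH binS natrD addrC.
Qed.

Lemma vander_multi k n (m : 'I_k -> nat) N : (N <= n)%N ->
  \sum_(f : {ffun 'I_k -> 'I_n.+1} | (\sum_i (f i : nat) == N)%N)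
     \prod_i ('C(m i, f i))%:R = ('C(\sum_i m i, N))%:R :> R0.
Proof.
move=> hN.
pose T i : {poly R0} := \sum_(j : 'I_n.+1) ('C(m i, j))%:R *: 'X^j.
have h1 : \prod_i T i = \sum_(f : {ffun 'I_k -> 'I_n.+1})
     (\prod_i ('C(m i, f i))%:R : R0) *: 'X^(\sum_i (f i : nat)).
  rewrite /T bigA_distr_bigA /=; apply: eq_bigr => f _.
  rewrite -prodrXr -mul_polyC rmorph_prod -big_split /=.
  by apply: eq_bigr => i _; rewrite mul_polyC.
have h2 : agree n (\prod_i T i) ((1 + 'X) ^+ (\sum_i m i)).
  rewrite -prodrXr; apply: (big_ind2 (agree n)) => //.
  - by move=> p p' q q'; apply: agreeM.
  move=> i _ j hj; rewrite coef1X /T coef_sum.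
  rewrite (bigD1 (Ordinal (hj : (j < n.+1)%N))) //= coefZ coefXn eqxx mulr1.
  rewrite big1 ?addr0 // => l hl; rewrite coefZ coefXn.
  case: eqP => [hjl|]; last by rewrite mulr0.
  by move: hl; rewrite -(inj_eq val_inj) /= hjl eqxx.
rewrite -coef1X -(h2 _ hN) h1 coef_sum.
rewrite big_mkcond /=; apply: eq_bigr => f _; rewrite coefZ coefXn eq_sym; by case: eqP; rewrite ?mulr1 ?mulr0.
Qed.
End PartII.

Section PartIII.
Variables (K : fieldType) (r' k : nat).
Local Notation MX := 'M[K]_r'.+1.

Lemma natmx (j : nat) : (j%:R)%:M = j%:R :> MX.
Proof. by rewrite -scalemx1 scaler_nat idmxE. Qed.

Lemma mpochE (X : MX) M : mpoch X M = \prod_(j < M) (X + j%:R).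
Proof. by rewrite /mpoch mulmxE idmxE; apply: eq_bigr => j _; rewrite natmx. Qed.

Lemma mxprodE (F : 'I_k -> MX) : mxprod F = \prod_i F i.
Proof. by rewrite /mxprod mulmxE idmxE. Qed.

Lemma mpochinvE (X : MX) M : mpochinv X M = (mpoch X M)^-1.
Proof. by []. Qed.

Lemma mpoch_split (X : MX) a b : mpoch X (a + b) = mpoch X a * mpoch (X + a%:R) b.
Proof.
rewrite !mpochE big_split_ord /=; congr (_ * _).
by apply: eq_bigr => j _; rewrite natrD addrA.
Qed.

Lemma comm_mpoch (X Y : MX) a b : GRing.comm X Y -> GRing.comm (mpoch X a) (mpoch Y b).
Proof.
move=> hXY; rewrite !mpochE; apply: commr_sym; apply: commr_prod => j _.
apply: commr_sym; apply: commr_prod => l _.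
apply: commrD; last by apply: commr_nat.
apply: commr_sym; apply: commrD; last by apply: commr_nat.
exact: commr_sym.
Qed.

Lemma unit_mpoch (X : MX) a : (forall j, X + j%:R \is a GRing.unit) -> mpoch X a \is a GRing.unit.
Proof.
move=> hX; rewrite mpochE; apply: (big_ind (fun M : MX => M \is a GRing.unit)) => //.
  by rewrite unitr1.
move=> x y hx hy; rewrite -mulmxE; change (x *m y \in unitmx); rewrite unitmx_mul; apply/andP; split; [exact: hx|exact: hy].
Qed.

Lemma prod_merge (X Y : 'I_k -> MX) : (forall i j, GRing.comm (X i) (Y j)) ->
  (\prod_i X i) * (\prod_i Y i) = \prod_i (X i * Y i).
Proof.
move=> h; rewrite /index_enum; elim: (Finite.enum _) => [|a s IH].
  by rewrite !big_nil mulr1.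
rewrite !big_cons -IH mulrA -[X a * _ * Y a]mulrA.
have -> : \prod_(j <- s) X j * Y a = Y a * \prod_(j <- s) X j.
  by apply: commr_sym; apply: commr_prod => j _; apply: commr_sym.
by rewrite !mulrA.
Qed.

Lemma mono_FA (A' : MX) (B C : 'I_k -> MX) (v m : mindex k) :
  (forall i, GRing.comm A' (B i)) -> (forall i j, GRing.comm (B i) (B j)) ->
  (forall i j, GRing.comm (C i) (C j)) ->
  (forall i (l : nat), C i + l%:R \is a GRing.unit) ->
  mono_mul (mxprod (fun i => mpoch (B i) (v i))) v
     (FA A' (fun i => B i + ((v i)%:R)%:M) (fun i => C i + ((v i)%:R)%:M))
     (mxprod (fun i => mpochinv (C i) (v i))) m
  = if [forall i, (v i <= m i)%N] then
      (((\prod_i (m i - v i)`!)%N)%:R)^-1 *: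
        (mpoch A' (mtot m - mtot v) *m mxprod (fun i => mpoch (B i) (m i))
           *m mxprod (fun i => mpochinv (C i) (m i)))
    else 0.
Proof.
move=> hAB hBB hCC hCu.
rewrite /mono_mul; case: ifP => // /forallP hv.
rewrite /FA -scalemxAr -scalemxAl; congr (_ *: _).
  by congr (_ ^-1); congr (_%:R); apply: eq_bigr => i _; rewrite ffunE.
have -> : mtot [ffun i => (m i - v i)%N] = (mtot m - mtot v)%N.
  apply/eqP; rewrite -(eqn_add2r (mtot v)) subnK; last first.
    by rewrite /mtot; apply: leq_sum => i _.
  rewrite /mtot -big_split /=; apply/eqP; apply: eq_bigr => i _.
  by rewrite ffunE subnK.
rewrite !mulmxE !mxprodE.
set a := mpoch A' _.
set PBv := \prod_i _.
have hPa : GRing.comm PBv a.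
  apply: commr_sym; apply: commr_prod => i _; apply: comm_mpoch; exact: hAB.
rewrite !mulrA hPa -!mulrA; congr (_ * _).
rewrite mulrA; congr (_ * _).
  rewrite /PBv prod_merge; last first.
    move=> i j; rewrite natmx; apply: comm_mpoch; apply: commrD; first exact: hBB.
    exact: commr_nat.
  apply: eq_bigr => i _; rewrite ffunE.
  have -> : (B i + ((v i)%:R)%:M) = B i + (v i)%:R by rewrite natmx.
  by rewrite -mpoch_split subnKC.
rewrite prod_merge; last first.
  move=> i j; rewrite natmx !mpochinvE; apply: commrV; apply: commr_sym; apply: commrV.
  apply: comm_mpoch; apply: commrD; first exact: hCC.
  exact: commr_nat.
apply: eq_bigr => i _; rewrite ffunE !mpochinvE.
have -> : (C i + ((v i)%:R)%:M) = C i + (v i)%:R by rewrite natmx.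
rewrite -invrM; first by rewrite -mpoch_split subnKC.
  by apply: unit_mpoch.
by apply: unit_mpoch => j; rewrite -addrA -natrD.
Qed.

End PartIII.

Lemma prod_fact_dvd (I : Type) (s : seq I) (F : I -> nat) :
  (\prod_(i <- s) (F i)`! %| (\sum_(i <- s) F i)`!)%N.
Proof.
elim: s => [|a s IH]; first by rewrite !big_nil.
rewrite !big_cons; apply: (dvdn_trans (dvdn_mul (dvdnn _) IH)).
by rewrite -(bin_fact (leq_addr (\sum_(j <- s) F j) (F a))) addKn dvdn_mull.
Qed.

Section Weight.
Variables (K : numFieldType) (k : nat).

Lemma fact_neq0 j : (j`!)%:R != 0 :> K.
Proof. by rewrite pnatr_eq0 -lt0n fact_gt0. Qed.

Lemma prodfact_neq0 (F : 'I_k -> nat) : ((\prod_i (F i)`!)%N)%:R != 0 :> K.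
Proof. by rewrite pnatr_eq0 -lt0n prodn_gt0 // => i; rewrite fact_gt0. Qed.

Lemma weight n (v m : mindex k) : (mtot v <= n)%N -> (forall i, v i <= m i)%N ->
  (multinom n v)%:R / ((\prod_i (m i - v i)`!)%N)%:R =
  (((\prod_i (m i)`!)%N)%:R)^-1 * ((n ^_ (mtot v) * \prod_i 'C(m i, v i))%N)%:R :> K.
Proof.
move=> hN hv.
have d1 : ((\prod_i (v i)`! * (n - mtot v)`!) %| n`!)%N.
  rewrite -(bin_fact hN) dvdn_mull // dvdn_mul // /mtot.
  exact: prod_fact_dvd.
rewrite /multinom natr_div //; last first.
  by rewrite unitfE natrM mulf_neq0 // ?prodfact_neq0 // fact_neq0.
have e1 : n`! = (n ^_ (mtot v) * (n - mtot v)`!)%N by rewrite ffact_fact.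
have e2 : (\prod_i (m i)`! = \prod_i 'C(m i, v i) * (\prod_i (v i)`! * \prod_i (m i - v i)`!))%N.
  rewrite -!big_split /=; apply: eq_bigr => i _; by rewrite bin_fact.
rewrite e1 e2 !natrM.
have h1 := prodfact_neq0 v. have h2 := prodfact_neq0 (fun i => m i - v i)%N.
have h3 := fact_neq0 (n - mtot v).
have h4 : ((\prod_i 'C(m i, v i))%N)%:R != 0 :> K.
  by rewrite pnatr_eq0 -lt0n prodn_gt0 // => i; rewrite bin_gt0.
field.
by rewrite h1 h2 h3 h4.
Qed.
End Weight.

Section Main.
Variables (K : numFieldType) (r' k : nat).
Local Notation MX := 'M[K]_r'.+1.
Variables (B C : 'I_k -> MX).
Hypothesis hBB : forall i j, GRing.comm (B i) (B j).
Hypothesis hCC : forall i j, GRing.comm (C i) (C j).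
Hypothesis hCu : forall i (l : nat), C i + l%:R \is a GRing.unit.

Lemma assemble n (G : nat -> MX) (s : nat -> K) (W : mindex k -> K) (m : mindex k) :
  (forall N i, GRing.comm (G N) (B i)) ->
  (forall v, W v = (multinom n v)%:R * s (mtot v)) ->
  \sum_(nv : {ffun 'I_k -> 'I_n.+1} | (mtot [ffun i => (nv i : nat)] <= n)%N)
     W [ffun i => (nv i : nat)] *:
     mono_mul (mxprod (fun i => mpoch (B i) ([ffun i => (nv i : nat)] i))) [ffun i => (nv i : nat)]
       (FA (G (mtot [ffun i => (nv i : nat)]))
           (fun i => B i + (([ffun i => (nv i : nat)] i)%:R)%:M)
           (fun i => C i + (([ffun i => (nv i : nat)] i)%:R)%:M))
       (mxprod (fun i => mpochinv (C i) ([ffun i => (nv i : nat)] i))) m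
  = (((\prod_i (m i)`!)%N)%:R)^-1 *:
    ((\sum_(N < n.+1) (((n ^_ N * 'C(mtot m, N))%N)%:R * s N) *: mpoch (G N) (mtot m - N))
      *m mxprod (fun i => mpoch (B i) (m i)) *m mxprod (fun i => mpochinv (C i) (m i))).
Proof.
move=> hG hW.
set P := mxprod (fun i => mpoch (B i) (m i)).
set Q := mxprod (fun i => mpochinv (C i) (m i)).
have Emt : forall f : {ffun 'I_k -> 'I_n.+1}, mtot [ffun i => (f i : nat)] = (\sum_i (f i : nat))%N.
  by move=> f; rewrite /mtot; apply: eq_bigr => i _; rewrite ffunE.
rewrite (eq_bigr (fun f : {ffun 'I_k -> 'I_n.+1} =>
   (((\prod_i (m i)`!)%N)%:R)^-1 *:
   ((((n ^_ (\sum_i (f i : nat)) * \prod_i 'C(m i, f i))%N)%:R * s (\sum_i (f i : nat))%N) *: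
     (mpoch (G (\sum_i (f i : nat))%N) (mtot m - \sum_i (f i : nat)) *m P *m Q)))); last first.
  move=> f hf; rewrite hW mono_FA; [|by move=> i; apply: hG|exact: hBB|exact: hCC|exact: hCu].
  rewrite !Emt scalerA; case: ifP => [/forallP hv | /negbT /forallPn [i /negP hi]].
    rewrite scalerA; congr (_ *: _).
    rewrite mulrAC -Emt weight //.
    rewrite -mulrA; congr (_ * (_%:R * _)); congr (_ * _)%N.
    by apply: eq_bigr => j _; rewrite ffunE.
  rewrite scaler0 [X in (_ ^_ _ * X)%N](bigD1 i) //= bin_small ?mul0n ?muln0 ?mul0r ?mulr0 ?scale0r //.
  by rewrite ltnNge; apply/negP; rewrite ffunE in hi.
rewrite -scaler_sumr; congr (_ *: _).
under eq_bigr do rewrite !scalemxAl.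
rewrite -!mulmx_suml; congr (_ *m _ *m _).
rewrite (eq_bigr (fun N : 'I_n.+1 => \sum_(f : {ffun 'I_k -> 'I_n.+1} | (\sum_i (f i : nat) == N)%N)
   ((((n ^_ (\sum_i (f i:nat)) * \prod_i 'C(m i, f i))%N)%:R * s (\sum_i (f i : nat))%N) *:
     mpoch (G (\sum_i (f i : nat))%N) (mtot m - \sum_i (f i:nat))))); last first.
  move=> N _.
  rewrite (eq_bigr (fun f : {ffun 'I_k -> 'I_n.+1} => ((n ^_ N)%:R * s N) *:
     (((\prod_i 'C(m i, f i))%N)%:R *: mpoch (G N) (mtot m - N)))); last first.
    by move=> f /eqP ->; rewrite scalerA natrM mulrAC.
  rewrite -scaler_sumr -scaler_suml.
  under eq_bigr do rewrite natr_prod.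
  rewrite vander_multi; last by rewrite -ltnS.
  by rewrite scalerA natrM mulrAC.
rewrite (exchange_big_dep (fun f : {ffun 'I_k -> 'I_n.+1} => (\sum_i (f i : nat) <= n)%N)) /=; last first.
  by move=> N f _ /eqP ->; rewrite -ltnS.
apply: eq_big => f; first by rewrite Emt.
move=> hf; rewrite Emt in hf.
have hf' : (\sum_i (f i : nat) < n.+1)%N by rewrite ltnS.
rewrite (big_pred1 (Ordinal hf')) ?Emt //.
Qed.
End Main.

Section Transfer.
Variables (K : numFieldType) (r' : nat).
Local Notation MX := 'M[K]_r'.+1.

Lemma mpoch_horner (A : MX) (q : {poly K}) L :
  mpoch (horner_mx A q) L = horner_mx A (Pc q L).
Proof.
rewrite mpochE /Pc rmorph_prod; apply: eq_bigr => j _.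
by rewrite rmorphD /= rmorph_nat.
Qed.

Lemma L1 (A : MX) n M :
  mpoch (A + (n%:R)%:M) M =
  \sum_(N < n.+1) (((n ^_ N * 'C(M, N))%N)%:R * 1) *: mpoch (A + (N%:R)%:M) (M - N).
Proof.
have e c : A + (c%:R)%:M = horner_mx A ('X + c%:R).
  by rewrite rmorphD /= horner_mx_X !rmorph_nat.
rewrite e mpoch_horner (@I1 _ n 'X M n.+1 (ltnSn n)) rmorph_sum; apply: eq_bigr => N _.
rewrite rmorphM /= rmorph_nat -mpoch_horner -e mulr1 /cc -bin_ffact mulnAC.
by rewrite scaler_nat mulr_natl.
Qed.

Lemma L2 (A : MX) n M :
  mpoch (A - (n%:R)%:M) M =
  \sum_(N < n.+1) (((n ^_ N * 'C(M, N))%N)%:R * (-1) ^+ N) *: mpoch A (M - N).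
Proof.
have e : A - (n%:R)%:M = horner_mx A ('X - n%:R).
  by rewrite rmorphB /= horner_mx_X !rmorph_nat.
have eA : A = horner_mx A 'X by rewrite horner_mx_X.
rewrite e mpoch_horner (@I2 _ n 'X M n.+1 (ltnSn n)) rmorph_sum; apply: eq_bigr => N _.
rewrite !rmorphM /= rmorph_nat rmorphXn rmorphN rmorph1 -mpoch_horner -eA.
rewrite /cc -bin_ffact !rmorph_nat -mul_scalar_mx !rmorphM /= rmorphXn rmorphN rmorph1 !natmx mulmxE !mulrA; congr (_ * _ * _).
by rewrite -!natrM mulnAC.
Qed.
End Transfer.

Unset Implicit Arguments. Set Strict Implicit. Set Printing Implicit Defensive.

Theorem mainTheorem2 (R : realType) (r k : nat) (A : 'M[R[i]]_r)
  (B C : 'I_k -> 'M[R[i]]_r) (n : nat) :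
  (1 <= k)%N ->
  (forall (i : 'I_k) (m : nat), C i + (m%:R)%:M \in unitmx) ->
  (forall i : 'I_k, A *m B i = B i *m A) ->
  (forall i j : 'I_k, B i *m B j = B j *m B i) ->
  (forall i j : 'I_k, C i *m C j = C j *m C i) ->
  (1 <= n)%N ->
  (forall m : nat, A + (m%:R)%:M \in unitmx) ->
  (forall m : mindex k,
     FA (A + (n%:R)%:M) B C m =
     \sum_(nv : {ffun 'I_k -> 'I_n.+1} | (mtot [ffun i => (nv i : nat)] <= n)%N)
        let nv' := [ffun i => (nv i : nat)] in
        (multinom n nv')%:R *:
          mono_mul (mxprod (fun i => mpoch (B i) (nv' i))) nv'
            (FA (A + ((mtot nv')%:R)%:M)
                (fun i => B i + ((nv' i)%:R)%:M)
                (fun i => C i + ((nv' i)%:R)%:M))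
            (mxprod (fun i => mpochinv (C i) (nv' i))) m)
  /\
  ((forall n1 : nat, (n1 <= n)%N -> A - (n1%:R)%:M \in unitmx) ->
   forall m : mindex k,
     FA (A - (n%:R)%:M) B C m =
     \sum_(nv : {ffun 'I_k -> 'I_n.+1} | (mtot [ffun i => (nv i : nat)] <= n)%N)
        let nv' := [ffun i => (nv i : nat)] in
        ((multinom n nv')%:R * (-1) ^+ (mtot nv')) *:
          mono_mul (mxprod (fun i => mpoch (B i) (nv' i))) nv'
            (FA A
                (fun i => B i + ((nv' i)%:R)%:M)
                (fun i => C i + ((nv' i)%:R)%:M))
            (mxprod (fun i => mpochinv (C i) (nv' i))) m).
Proof.
move=> _ hCu hAB hBB hCC _ _.
case: r A B C hCu hAB hBB hCC => [|r'] A B C hCu hAB hBB hCC.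
  by split=> [m|_ m]; apply/matrixP => -[].
have hBB' : forall i j, GRing.comm (B i) (B j).
  by move=> i j; rewrite /GRing.comm -mulmxE hBB.
have hCC' : forall i j, GRing.comm (C i) (C j).
  by move=> i j; rewrite /GRing.comm -mulmxE hCC.
have hCu' : forall i (l : nat), C i + l%:R \is a GRing.unit.
  by move=> i l; rewrite -natmx; exact: hCu.
have hA : forall i, GRing.comm A (B i).
  by move=> i; rewrite /GRing.comm -mulmxE hAB.
split.
  move=> m.
  have hG : forall N i, GRing.comm (A + (N%:R)%:M) (B i).
    by move=> N i; rewrite natmx; apply: commr_sym; apply: commrD;
      [apply: commr_sym; exact: hA | exact: commr_nat].
  have E := @assemble _ r' k B C hBB' hCC' hCu' n (fun N => A + (N%:R)%:M) (fun _ => 1)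
    (fun v => (multinom n v)%:R) m hG (fun v => esym (mulr1 _)).
  apply: (eq_trans _ (esym E)).
  by rewrite /FA L1.
move=> _ m.
have hG : forall (N : nat) i, GRing.comm A (B i) by move=> N i; exact: hA.
have E := @assemble _ r' k B C hBB' hCC' hCu' n (fun _ => A) (fun N => (-1) ^+ N)
    (fun v => (multinom n v)%:R * (-1) ^+ (mtot v)) m hG (fun v => erefl).
apply: (eq_trans _ (esym E)).
by rewrite /FA L2.
Qed.
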